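(* Let $I$ be a set of integers and let $(a_{ij})_{i,j\in I}$ be a family of integers. Then there exist integers $(x_i)_{i\in I}$ such that $$x_j-x_i\equiv a_{ij}\pmod{(i,j)}\quad\text{for all } i,j\in I$$ if and only if $$a_{ij}+a_{jk}\equiv a_{ik}\pmod{(i,j,k)}\quad\text{for all } i,j,k\in I.$$
   Context: For integers $i_0,\dots,i_m$, the notation $(i_0,\dots,i_m)$ denotes the ideal of $\mathbb{Z}$ generated by $i_0,\dots,i_m$, i.e. $\gcd(i_0,\dots,i_m)\mathbb{Z}$. A congruence modulo an ideal $J$ means that the difference lies in $J$; in particular, a congruence modulo the zero ideal is an equality. *)

(* Defs.v *)
From mathcomp Require Import all_boot all_order all_algebra.
Set Implicit Arguments. Unset Strict Implicit. Unset Printing Implicit Defensive.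
Import Order.TTheory GRing.Theory Num.Theory.
Local Open Scope ring_scope.

(* congruence modulo the ideal (i_0,...,i_m) = gcd(i_0,...,i_m) Z.
   Note (m = n %[mod 0])%Z is equality, matching "mod the zero ideal". *)
Definition cong_ideal2 (i j : int) (u v : int) : Prop :=
  (u = v %[mod gcdz i j])%Z.
Definition cong_ideal3 (i j k : int) (u v : int) : Prop :=
  (u = v %[mod gcdz (gcdz i j) k])%Z.

(* Main.v *)
Require Import Defs.
From mathcomp Require Import all_boot all_order all_algebra.
From Stdlib Require Import ClassicalEpsilon.
From mathcomp Require Import ring.
Set Implicit Arguments. Unset Strict Implicit. Unset Printing Implicit Defensive.
Import Order.TTheory GRing.Theory Num.Theory.
Local Open Scope ring_scope.

Lemma cong_dvd (u v d : int) : (u = v %[mod d])%Z <-> (d %| u - v)%Z.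
Proof. by split=> H; [rewrite -eqz_mod_dvd; apply/eqP | apply/eqP; rewrite eqz_mod_dvd]. Qed.

Section CRT.
Variables (P : nat -> bool) (d r : nat -> int).

Fixpoint Lm (n : nat) : nat :=
  if n is n'.+1 then (if P n' then lcmn (Lm n') `|d n'| else Lm n') else 1%N.

Lemma Lm_dvd n m : (m < n)%N -> P m -> (`|d m| %| Lm n)%N.
Proof.
elim: n => // n IH; rewrite ltnS leq_eqVlt => /orP[/eqP-> Pm|lt Pm] /=.
  by rewrite Pm dvdn_lcmr.
case: (P n); last exact: IH.
exact: dvdn_trans (IH lt Pm) (dvdn_lcml _ _).
Qed.

Lemma Lm_gcd n (w z : nat) :
  (forall m, (m < n)%N -> P m -> (gcdn `|d m| w %| z)%N) -> (gcdn (Lm n) w %| z)%N.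
Proof.
elim: n => [|n IH] H /=; first by rewrite gcd1n dvd1n.
have H' : forall m, (m < n)%N -> P m -> (gcdn `|d m| w %| z)%N.
  by move=> m lt; apply: H; apply: ltnW.
case Pn: (P n); last exact: IH.
rewrite Order.NatDvd.meetUl dvdn_lcm (IH H') /=.
exact: H.
Qed.

Lemma crt n :
  (forall m l, (m < n)%N -> (l < n)%N -> P m -> P l ->
     (gcdz (d m) (d l) %| r m - r l)%Z) ->
  exists y, forall m, (m < n)%N -> P m -> (d m %| y - r m)%Z.
Proof.
elim: n => [|n IH] H; first by exists 0.
have [y Hy] : exists y, forall m, (m < n)%N -> P m -> (d m %| y - r m)%Z.
  by apply: IH => m l lm ll; apply: H; apply: ltnW.
case Pn: (P n); last first.
  exists y => m; rewrite ltnS leq_eqVlt => /orP[/eqP->|]; first by rewrite Pn.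
  exact: Hy.
have hg : (gcdz (Lm n)%:Z (d n) %| y - r n)%Z.
  rewrite dvdzE /gcdz /= ?absz_nat.
  apply: Lm_gcd => m lt Pm.
  have : (gcdz (d m) (d n) %| y - r n)%Z.
    have -> : y - r n = (y - r m) + (r m - r n) by rewrite addrA subrK.
    apply: rpredD; last exact: (H m n (ltnW lt) (ltnSn n) Pm Pn).
    exact: dvdz_trans (dvdz_gcdl _ _) (Hy m lt Pm).
  by rewrite dvdzE.
have [u [v Huv]] := Bezoutz (Lm n)%:Z (d n).
have [k Hk] := dvdzP hg.
exists (y - k * u * (Lm n)%:Z) => m; rewrite ltnS leq_eqVlt => /orP[/eqP-> _|lt Pm].
  have -> : y - k * u * (Lm n)%:Z - r n = k * v * d n.
    have -> : y = r n + k * gcdz (Lm n)%:Z (d n) by rewrite -Hk addrC subrK.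
    rewrite -Huv; ring.
  exact: dvdz_mull (dvdzz _).
have -> : y - k * u * (Lm n)%:Z - r m = (y - r m) - k * u * (Lm n)%:Z by ring.
apply: rpredB; first exact: Hy.
apply: dvdz_mull; rewrite dvdzE ?absz_nat; exact: Lm_dvd.
Qed.
End CRT.

Section Main.
Variables (P : nat -> bool) (c : nat -> int) (b : nat -> nat -> int).
Hypothesis Hb : forall i j k, P i -> P j -> P k ->
  (gcdz (gcdz (c i) (c j)) (c k) %| b i j + b j k - b i k)%Z.

Definition good n (X : nat -> int) (y : int) := forall m, (m < n)%N -> P m -> P n ->
  (gcdz (c m) (c n) %| y - X m - b m n)%Z.

Fixpoint G n : nat -> int :=
  if n is n'.+1 then (fun m => if m == n' then epsilon (inhabits 0) (good n' (G n')) else G n' m)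
  else fun _ => 0.

Definition X n := G n.+1 n.

Lemma G_X k m : (m < k)%N -> G k m = X m.
Proof.
elim: k => // k IH; rewrite ltnS leq_eqVlt => /orP[/eqP->|lt] /=.
  by [].
by rewrite (ltn_eqF lt) IH.
Qed.

Lemma main n : good n (G n) (X n).
Proof.
elim/ltn_ind: n => n IH.
rewrite /X /= eqxx; apply: epsilon_spec.
have compat : forall m l, (l < m)%N -> (m < n)%N -> P m -> P l -> P n ->
   (gcdz (gcdz (c m) (c n)) (gcdz (c l) (c n)) %|
     (G n m + b m n) - (G n l + b l n))%Z.
  move=> m l lm mn Pm Pl Pn.
  rewrite !G_X //; last exact: ltn_trans lm mn.
  have h1 := IH m mn l lm Pl Pm; rewrite G_X // in h1.
  have h2 := Hb Pl Pm Pn.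
  have -> : X m + b m n - (X l + b l n) =
     (X m - X l - b l m) + (b l m + b m n - b l n) by ring.
  apply: rpredD.
    apply: dvdz_trans h1; rewrite dvdz_gcd; apply/andP; split.
      exact: dvdz_trans (dvdz_gcdr _ _) (dvdz_gcdl _ _).
    exact: dvdz_trans (dvdz_gcdl _ _) (dvdz_gcdl _ _).
  apply: dvdz_trans h2; rewrite !dvdz_gcd.
  rewrite (dvdz_trans (dvdz_gcdr _ _) (dvdz_gcdl _ _)).
  rewrite (dvdz_trans (dvdz_gcdl _ _) (dvdz_gcdl _ _)).
  by rewrite (dvdz_trans (dvdz_gcdl _ _) (dvdz_gcdr _ _)).
suff [y Hy] : exists y, forall m, (m < n)%N -> P m && P n ->
    (gcdz (c m) (c n) %| y - (G n m + b m n))%Z.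
  exists y => m mn Pm Pn.
  have := Hy m mn; rewrite Pm Pn => /(_ isT).
  by rewrite opprD addrA.
apply: (@crt (fun m => P m && P n) (fun m => gcdz (c m) (c n))
   (fun m => G n m + b m n) n).
move=> m l mn ln /andP[Pm Pn] /andP[Pl _].
case: (ltngtP l m) => [lm|ml|->]; first exact: compat.
  rewrite gcdzC -opprB rpredN; exact: compat.
by rewrite subrr dvdz0.
Qed.

End Main.

Definition eI (n : nat) : int := odflt 0 (unpickle n).
Lemma eIK z : eI (pickle z) = z.
Proof. by rewrite /eI pickleK. Qed.

Definition boolI (I : int -> Prop) z : bool :=
  if excluded_middle_informative (I z) then true else false.
Lemma boolIP (I : int -> Prop) z : boolI I z <-> I z.
Proof. by rewrite /boolI; case: excluded_middle_informative. Qed.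

Theorem theorem1 (I : int -> Prop) (a : int -> int -> int) :
  (exists x : int -> int,
     forall i j : int, I i -> I j -> cong_ideal2 i j (x j - x i) (a i j))
  <->
  (forall i j k : int, I i -> I j -> I k ->
     cong_ideal3 i j k (a i j + a j k) (a i k)).
Proof.
rewrite /cong_ideal2 /cong_ideal3; split.
  move=> [x Hx] i j k Ii Ij Ik; apply/cong_dvd.
  have h1 := proj1 (cong_dvd _ _ _) (Hx i j Ii Ij).
  have h2 := proj1 (cong_dvd _ _ _) (Hx j k Ij Ik).
  have h3 := proj1 (cong_dvd _ _ _) (Hx i k Ii Ik).
  have -> : a i j + a j k - a i k =
    (x k - x i - a i k) - (x j - x i - a i j) - (x k - x j - a j k) by ring.
  apply: rpredB; first apply: rpredB.
  - apply: dvdz_trans h3; rewrite dvdz_gcd (dvdz_gcdr _ _) andbT.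
    exact: dvdz_trans (dvdz_gcdl _ _) (dvdz_gcdl _ _).
  - exact: dvdz_trans (dvdz_gcdl _ _) h1.
  - apply: dvdz_trans h2; rewrite dvdz_gcd (dvdz_gcdr _ _) andbT.
    exact: dvdz_trans (dvdz_gcdl _ _) (dvdz_gcdr _ _).
move=> H.
pose P n := boolI I (eI n).
pose b m n := a (eI m) (eI n).
have Hb : forall i j k, P i -> P j -> P k ->
  (gcdz (gcdz (eI i) (eI j)) (eI k) %| b i j + b j k - b i k)%Z.
  move=> i j k /boolIP Pi /boolIP Pj /boolIP Pk.
  exact/cong_dvd/H.
have HX := main Hb.
have Hii : forall i, I i -> (gcdz i i %| a i i)%Z.
  move=> i Ii; have := proj1 (cong_dvd _ _ _) (H i i i Ii Ii Ii).
  rewrite -addrA subrr addr0 => h; apply: dvdz_trans h.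
  by rewrite dvdz_gcd dvdzz dvdz_gcdl.
exists (fun z => X P eI b (pickle z)) => i j Ii Ij; apply/cong_dvd.
have Pi : P (pickle i) by apply/boolIP; rewrite eIK.
have Pj : P (pickle j) by apply/boolIP; rewrite eIK.
case: (ltngtP (pickle i) (pickle j)) => [lt|lt|eq].
- have := HX (pickle j) (pickle i) lt Pi Pj.
  by rewrite G_X // /b !eIK.
- have := HX (pickle i) (pickle j) lt Pj Pi.
  rewrite G_X // /b !eIK => h.
  have h2 := proj1 (cong_dvd _ _ _) (H i j i Ii Ij Ii).
  set Xi := X _ _ _ (pickle i) in h *; set Xj := X _ _ _ (pickle j) in h *.
  have -> : Xj - Xi - a i j =
    - (Xi - Xj - a j i) - (a i j + a j i - a i i) - a i i by ring.
  apply: rpredB; first apply: rpredB.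
  + by rewrite rpredN gcdzC.
  + apply: dvdz_trans h2; rewrite dvdz_gcd dvdzz.
    exact: dvdz_gcdl.
  + apply: dvdz_trans (Hii i Ii); rewrite dvdz_gcd.
    by rewrite dvdz_gcdl.
- have eij : i = j by rewrite -(eIK i) eq eIK.
  subst j; rewrite subrr add0r rpredN; exact: Hii.
Qed.
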